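(* Suppose actions are chosen by contextual GP-TS-SDF: given $\mathcal{F}_{t-1}$, sample $g_t\sim\mathcal{GP}(\mu_{t-1}(\cdot,\cdot),\nu_t^2\sigma^2_{t-1}(\cdot,\cdot))$ and, for the given context $z_t$, select $x_t\in\arg\max_{x\in\mathcal{Q}}g_t(z_t,x)$. For any filtration $\mathcal{F}_{t-1}$ and given context $z_t$, conditioned on the event $E^f(t)$, $$\mathbb{P}\left(x_t\in\mathcal{Q}\setminus S_t\mid\mathcal{F}_{t-1}\right)\ge p-1/t^2,\qquad p=\frac{1}{4e\sqrt{\pi}}.$$
   Context: Setting (contextual GP bandits with delayed feedback). $\mathcal{Q}\subset\mathbb{R}^n$ finite action set, $\mathcal{Z}\subset\mathbb{R}^{n'}$ finite context set. $k$ a positive semidefinite kernel on $\mathcal{Z}\times\mathcal{Q}$ with $k\le1$; $g$ in its RKHS with $\|g\|_k\le\mathcal{B}_f$. In round $t$ the environment gives a context $z_t$, the learner selects $x_t\in\mathcal{Q}$ and gets $y_t=g(z_t,x_t)+\epsilon_t$ ($R$-sub-Gaussian $\epsilon_t$, $|y_t|\le\mathcal{B}_y$), observed after a random delay $d_t\in\{0,1,\ldots\}$ drawn from $\mathcal{D}$. For an integer $m\ge1$, $\rho_m=\mathbb{P}(d_s\le m)$, $\tilde y_{s,t}=y_s\mathbb{1}\{d_s\le\min(m,t-s)\}$. With $\lambda>0$, $w_i=(z_i,x_i)$, $w=(z,x)$: $\mu_{t-1}(w)=\mathbf{k}_{t-1}(w)^\top(\mathbf{K}_{t-1}+\lambda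 I)^{-1}\tilde{\mathbf{y}}_{t-1}$, $\sigma^2_{t-1}(w,w')=k(w,w')-\mathbf{k}_{t-1}(w)^\top(\mathbf{K}_{t-1}+\lambda I)^{-1}\mathbf{k}_{t-1}(w')$, $\sigma^2_{t-1}(w)=\sigma^2_{t-1}(w,w)$, $\mathbf{k}_{t-1}(w)=(k(w,w_i))_{i\le t-1}$, $\mathbf{K}_{t-1}=(k(w_i,w_j))_{i,j\le t-1}$, $\tilde{\mathbf{y}}_{t-1}=(\tilde y_{s,t})_{s\le t-1}$. $\gamma_t=\max_A\frac12\log\det(I+\lambda^{-1}\mathbf{K}_A)$ over collections of $t$ points of $\mathcal{Z}\times\mathcal{Q}$. For $\delta\in(0,1)$: $\beta_t=\mathcal{B}_f+(R+\mathcal{B}_y)\sqrt{2(\gamma_{t-1}+1+\log(4/\delta))}$, $\nu_t=\mathcal{B}_y\sum_{s=t-m}^{t-1}\sigma_{t-1}(z_s,x_s)+\beta_t$ (terms with $s<1$ omitted), $c_t=\nu_t(1+\sqrt{2\log(|\mathcal{Z}||\mathcal{Q}|t^2)})$. $\mathcal{F}_{t-1}$: history up to round $t-1$. $E^f(t)$: the event that $|\mu_{t-1}(z,x)-\rho_mg(z,x)|\le\nu_t\sigma_{t-1}(z,x)$ for all $z,x$. With $x_t^\star\in\arg\max_{x\in\mathcal{Q}}g(z_t,x)$ and $\Delta(z_t,x)=g(z_t,x_t^\star)-g(z_t,x)$, the saturated set is $S_t=\{x\in\mathcal{Q}:\rho_m\Delta(z_t,x)>c_t\sigma_{t-1}(z_t,x)\}$.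 *)

(* Defs.v *)
From HB Require Import structures.
From mathcomp Require Import all_boot all_order all_algebra.
From mathcomp Require Import all_classical all_reals all_analysis.
Set Implicit Arguments.
Unset Strict Implicit.
Unset Printing Implicit Defensive.
Import Order.TTheory GRing.Theory Num.Theory.
Local Open Scope classical_set_scope.
Local Open Scope ring_scope.

Section GPTS.
Variables (R : realType) (Z Q : finType).
Local Notation W := (Z * Q)%type.

Definition psd_kernel (k : W -> W -> R) : Prop :=
  forall (n : nat) (ws : 'I_n -> W) (a : 'I_n -> R),
    0 <= \sum_(i < n) \sum_(j < n) a i * a j * k (ws i) (ws j).

(* g lies in the RKHS of k (on the finite domain W) with norm <= B *)
Definition rkhs_norm_le (k : W -> W -> R) (g : W -> R) (B : R) : Prop :=
  exists alpha : W -> R,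
    (forall w, g w = \sum_(v : W) k w v * alpha v) /\
    \sum_(v : W) \sum_(u : W) alpha v * alpha u * k v u <= B ^+ 2.

Definition Kmat (k : W -> W -> R) n (ws : 'I_n -> W) : 'M[R]_n :=
  \matrix_(i, j) k (ws i) (ws j).
Definition kvec (k : W -> W -> R) n (ws : 'I_n -> W) (w : W) : 'rV[R]_n :=
  \row_i k w (ws i).

Definition post_mean (k : W -> W -> R) (lam : R) n (ws : 'I_n -> W)
    (yv : 'cV[R]_n) (w : W) : R :=
  (kvec k ws w *m invmx (Kmat k ws + lam%:M) *m yv) 0 0.
Definition post_cov (k : W -> W -> R) (lam : R) n (ws : 'I_n -> W)
    (w w' : W) : R :=
  k w w' - (kvec k ws w *m invmx (Kmat k ws + lam%:M) *m (kvec k ws w')^T) 0 0.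
Definition post_sd (k : W -> W -> R) (lam : R) n (ws : 'I_n -> W) (w : W) : R :=
  Num.sqrt (post_cov k lam ws w w).

(* censored observations ytilde_{s,t}, with round s = i.+1 *)
Definition ytil (m t : nat) n (y : 'I_n -> R) (dl : 'I_n -> nat) : 'cV[R]_n :=
  \col_i (if (dl i <= minn m (t - i.+1))%N then y i else 0).

Definition info_gain (k : W -> W -> R) (lam : R) (n : nat) : R :=
  \big[Num.max/0]_(A : {ffun 'I_n -> W})
     (ln (\det (1%:M + lam^-1 *: Kmat k (fun i => A i))) / 2).

Definition beta_t (k : W -> W -> R) (lam Bf Rn By delta : R) (t : nat) : R :=
  Bf + (Rn + By) *
       Num.sqrt (2 * (info_gain k lam t.-1 + 1 + ln (4 / delta))).

(* nu_t ; ws i is (z_s, x_s) with s = i.+1 *)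
Definition nu_t (k : W -> W -> R) (lam Bf Rn By delta : R) (m t : nat)
    (ws : 'I_t.-1 -> W) : R :=
  By * (\sum_(i < t.-1 | (t - m <= i.+1)%N) post_sd k lam ws (ws i))
  + beta_t k lam Bf Rn By delta t.

Definition c_t (nu : R) (t : nat) : R :=
  nu * (1 + Num.sqrt (2 * ln ((#|Z| * #|Q| * t ^ 2)%N%:R))).

(* rho_m = P(d <= m) for the delay distribution D on nat *)
Definition rho (D : nat -> R) (m : nat) : R := \sum_(i < m.+1) D i.

Definition Ef_event (g : W -> R) (mu sd : W -> R) (rhom nu : R) : Prop :=
  forall w, `|mu w - rhom * g w| <= nu * sd w.

(* saturated set S_t, with xstar a maximiser of g(z_t, .) *)
Definition saturated (g : W -> R) (sd : W -> R) (rhom c : R) (zt : Z)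
    (xstar : Q) (x : Q) : bool :=
  c * sd (zt, x) < rhom * (g (zt, xstar) - g (zt, x)).

(* law N(m, v) on R, v the variance; degenerate (Dirac) when v = 0 *)
Definition gauss_law (m v : R) : set R -> \bar R :=
  fun A => if v == 0 then \d_m A else normal_prob m (Num.sqrt v) A.

(* G is a Gaussian random vector indexed by W with given mean and covariance
   (every linear combination is normal with the induced mean and variance) *)
Definition gaussian_vector d (Omega : measurableType d)
    (P : probability Omega R) (G : Omega -> W -> R)
    (mean : W -> R) (cov : W -> W -> R) : Prop :=
  forall a : W -> R,
    measurable_fun setT (fun om => \sum_(w : W) a w * G om w) /\
    forall A : set R, measurable A ->
      P ((fun om => \sum_(w : W) a w * G om w) @^-1` A) =
      gauss_law (\sum_(w : W) a w * mean w)
                (\sum_(w : W) \sum_(w' : W) a w * a w' * cov w w') A.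

End GPTS.

Definition p_const {R : realType} : R :=
  (4 * expR 1 * Num.sqrt (pi : R))^-1.

(* Main.v *)
Require Import Defs.
From HB Require Import structures.
From mathcomp Require Import all_boot all_order all_algebra.
From mathcomp Require Import all_classical all_reals all_analysis.
From mathcomp Require Import ring lra.
Import Order.TTheory GRing.Theory Num.Theory numFieldNormedType.Exports.
Local Open Scope classical_set_scope.
Local Open Scope ring_scope.
Lemma G1 (R : realType) (m V a : R) : 0 <= V -> 0 <= a ->
  (gauss_law m V `](m + a * Num.sqrt V)%R, +oo[ <= (expR (- (a ^+ 2 / 2)))%:E)%E.
Proof.
move=> V0 a0; rewrite /gauss_law; have [->|Vn0] := eqVneq V 0.
  rewrite diracE; set b := (_ \in _).
  have -> : b = false.
    by apply/negbTE/negP; rewrite /b in_setE /= in_itv /= andbT sqrtr0 mulr0 addr0 ltxx.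
  by rewrite lee_fin expR_ge0.
have Vp : 0 < V by rewrite lt_neqAle eq_sym Vn0.
set s := Num.sqrt V.
have sp : 0 < s by rewrite sqrtr_gt0.
have sn0 : s != 0 by rewrite gt_eqF.
rewrite /normal_prob.
apply: (@le_trans _ _ (\int[lebesgue_measure]_(x in `](m + a * s)%R, +oo[)
    ((expR (- (a ^+ 2 / 2)))%:E * (normal_pdf (m + a * s) s x)%:E))%E).
  apply: ge0_le_integral => //.
  - by move=> x _; rewrite lee_fin normal_pdf_ge0.
  - apply/measurable_realfun.measurable_EFinP; apply: measurable_funTS; exact: measurable_normal_pdf.
  - apply: measurable_funeM; apply/measurable_realfun.measurable_EFinP; apply: measurable_funTS; exact: measurable_normal_pdf.
  move=> x /=; rewrite in_itv /= andbT => hx.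
  rewrite -EFinM lee_fin !normal_pdfE // mulrCA ler_wpM2l ?normal_peak_ge0 //.
  rewrite /normal_fun -expRD ler_expR.
  rewrite -subr_ge0.
  have -> : (- (a ^+ 2 / 2) + - (x - (m + a * s)) ^+ 2 / (s ^+ 2 *+ 2) -
     - (x - m) ^+ 2 / (s ^+ 2 *+ 2)) = a * (x - m - a * s) / s.
    by field.
  apply: divr_ge0; last exact: ltW.
  apply: mulr_ge0 => //; lra.
apply: (@le_trans _ _ (\int[lebesgue_measure]_(x in setT)
    ((expR (- (a ^+ 2 / 2)))%:E * (normal_pdf (m + a * s) s x)%:E))%E).
  apply: ge0_subset_integral => //.
  - apply: measurable_funeM; apply/measurable_realfun.measurable_EFinP; exact: measurable_normal_pdf.
  - by move=> x _; rewrite -EFinM lee_fin mulr_ge0 ?expR_ge0 ?normal_pdf_ge0.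
rewrite ge0_integralZl //.
- by rewrite integral_normal_pdf mule1.
- apply/measurable_realfun.measurable_EFinP; exact: measurable_normal_pdf.
- by move=> x _; rewrite lee_fin normal_pdf_ge0.
Qed.
Lemma p_const_pos (R : realType) : 0 < 4 * expR (1:R) * Num.sqrt (pi : R).
Proof.
apply: mulr_gt0; last by rewrite sqrtr_gt0 pi_gt0.
by apply: mulr_gt0 => //; exact: expR_gt0.
Qed.

Lemma p_const_le1 (R : realType) : (p_const : R) <= 1.
Proof.
have hp := p_const_pos R.
rewrite /p_const invr_le1 ?unitfE ?gt_eqF //.
have e2 : 2 <= expR (1 : R) by have := expR_ge1Dx (1 : R); lra.
have sp : 1 <= Num.sqrt (pi : R).
  by rewrite -sqrtr1 ler_sqrt //; have := @pi_ge2 R; lra.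
have : 0 <= expR (1:R) * (Num.sqrt pi - 1) by apply: mulr_ge0; [exact: expR_ge0| lra].
nra.
Qed.

Lemma G2 (R : realType) (m V : R) : 0 <= V ->
  ((p_const : R)%:E <= gauss_law m V `[(m + Num.sqrt V)%R, +oo[)%E.
Proof.
move=> V0; rewrite /gauss_law; have [->|Vn0] := eqVneq V 0.
  rewrite diracE; set b := (_ \in _).
  have hb : b by rewrite /b in_setE /= in_itv /= andbT sqrtr0 addr0 lexx.
  rewrite hb.
  by rewrite lee_fin p_const_le1.
have Vp : 0 < V by rewrite lt_neqAle eq_sym Vn0.
set s := Num.sqrt V.
have sp : 0 < s by rewrite sqrtr_gt0.
have sn0 : s != 0 by rewrite gt_eqF.
rewrite /normal_prob.
set c := normal_peak s * expR (- (9 / 8)).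
apply: (@le_trans _ _ (\int[lebesgue_measure]_(x in `[(m + s)%R, (m + s * (3/2))%R])
    (normal_pdf m s x)%:E))%E; last first.
  apply: ge0_subset_integral => //.
  - apply/measurable_realfun.measurable_EFinP; apply: measurable_funTS; exact: measurable_normal_pdf.
  - by move=> x _; rewrite lee_fin normal_pdf_ge0.
  - move=> x /=; rewrite !in_itv /= andbT => /andP[] //.
apply: (@le_trans _ _ (\int[lebesgue_measure]_(x in `[(m + s)%R, (m + s * (3/2))%R])
    (cst c%:E x)))%E; last first.
  apply: ge0_le_integral => //.
  - by move=> x _; rewrite lee_fin mulr_ge0 ?normal_peak_ge0 ?expR_ge0.
  - apply/measurable_realfun.measurable_EFinP; apply: measurable_funTS; exact: measurable_normal_pdf.
  move=> x /=; rewrite in_itv /= => /andP[h1 h2].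
  rewrite lee_fin normal_pdfE // /c ler_wpM2l ?normal_peak_ge0 // /normal_fun ler_expR mulNr lerN2.
  rewrite ler_pdivrMr; last by rewrite -mulr_natr mulr_gt0 // exprn_gt0.
  rewrite -mulr_natr; nra.
have H := lebesgue_measure_itv (R:=R) `[(m + s)%R, (m + s * (3/2))%R].
rewrite /= lte_fin ifT in H; last by nra.
rewrite integral_cst //.
rewrite [X in (_ * X)%E]H -EFinD -EFinM lee_fin.
have hpk : normal_peak s = (s * (Num.sqrt 2 * Num.sqrt pi))^-1.
  rewrite /normal_peak -mulrnAr; rewrite sqrtrM ?sqr_ge0 // sqrtr_sqr ger0_norm ?ltW //.
  by rewrite -mulr_natl sqrtrM.
have he : expR (- (9 / 8) : R) = (expR 1)^-1 * expR (- (1/8)).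
  by rewrite -expRN -expRD; congr expR; lra.
have r2p : 0 < Num.sqrt (2 : R) by rewrite sqrtr_gt0.
have qp : 0 < Num.sqrt (pi : R) by rewrite sqrtr_gt0 pi_gt0.
have ep : 0 < expR (1 : R) by exact: expR_gt0.
rewrite /c hpk he /p_const.
have -> : (s * (Num.sqrt 2 * Num.sqrt pi))^-1 * ((expR 1)^-1 * expR (- (1 / 8))) *
    (m + s * (3 / 2) - (m + s)) =
    (4 * expR 1 * Num.sqrt pi)^-1 * (2 * expR (- (1 / 8)) / Num.sqrt 2).
  field.
  by rewrite !gt_eqF.
rewrite ler_peMr ?invr_ge0 ?ltW ?p_const_pos //.
rewrite ltr_pdivlMr // mul1r.
have f78 : 7/8 <= expR (- (1/8) : R) by have := expR_ge1Dx (- (1/8) : R); lra.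
have r2sq : Num.sqrt (2:R) ^+ 2 = 2 by rewrite sqr_sqrtr.
rewrite expr2 in r2sq.
have : Num.sqrt (2:R) < 7/4.
  have h : (Num.sqrt (2:R) - 7/4) * (Num.sqrt 2 + 7/4) < 0 by nra.
  rewrite pmulr_llt0 in h; [lra | lra].
move=> h2; rewrite ?mul1r in f78 *; lra.
Qed.
Lemma sum_ind (R : realType) (T : finType) (w : T) (r : R) (F : T -> R) :
  \sum_(v : T) (if v == w then r else 0) * F v = r * F w.
Proof.
rewrite (bigD1 w) //= eqxx big1 ?addr0 // => v /negbTE ->; by rewrite mul0r.
Qed.

Lemma sum_ind2 (R : realType) (T : finType) (w : T) (r : R) (C : T -> T -> R) :
  \sum_(v : T) \sum_(v' : T) (if v == w then r else 0) * (if v' == w then r else 0) * C v v'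
  = r * r * C w w.
Proof.
under eq_bigr => v _ do under eq_bigr => v' _ do rewrite mulrAC mulrC.
under eq_bigr => v _ do rewrite sum_ind.
rewrite (bigD1 w) //= eqxx big1 ?addr0; first by rewrite mulrA.
move=> v /negbTE ->; by rewrite mul0r mulr0.
Qed.

Lemma unif_itv (R : realType) (m a b : R) : 0 <= a -> a < b -> b <= 1 ->
  normal_prob m 0 `]a, b] = (b - a)%:E.
Proof.
move=> a0 ab b1; rewrite /normal_prob.
rewrite (eq_integral (cst 1%E)); last first.
  move=> x; rewrite inE /= in_itv /= => /andP[h1 h2].
  rewrite /normal_pdf eqxx indicE; set bb := (_ \in _).
  have hb : bb by rewrite /bb in_setE /= in_itv /=; apply/andP; split; lra.
  by rewrite hb.
have H := lebesgue_measure_itv (R:=R) `]a, b].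
rewrite /= lte_fin ab in H.
by rewrite integral_cst // [X in (_ * X)%E]H mul1e EFinD.
Qed.

Section Gv.
Variables (R : realType) (Z Q : finType) (d : measure_display) (Omega : measurableType d)
  (P : probability Omega R) (G : Omega -> Z * Q -> R) (mean : Z * Q -> R)
  (cov : Z * Q -> Z * Q -> R).
Hypothesis hG : gaussian_vector P G mean cov.

Lemma gv_coord (w : Z * Q) (r : R) :
  measurable_fun setT (fun om => r * G om w) /\
  forall A : set R, measurable A ->
    P ((fun om => r * G om w) @^-1` A) = gauss_law (r * mean w) (r * r * cov w w) A.
Proof.
have [h1 h2] := hG (fun v => if v == w then r else 0).
have e : (fun om => \sum_(v : Z * Q) (if v == w then r else 0) * G om v) = (fun om => r * G om w).
  by apply/funext => om; rewrite sum_ind.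
split.
  by move: h1; rewrite e.
move=> A mA. move: (h2 A mA). rewrite e.
by rewrite (@sum_ind R _ w r mean) (@sum_ind2 R _ w r cov).
Qed.


Lemma gv_law (w : Z * Q) (A : set R) : measurable A ->
  P ((fun om => G om w) @^-1` A) = gauss_law (mean w) (cov w w) A.
Proof.
move=> mA; have [_ h] := gv_coord w 1.
have e : (fun om => 1 * G om w) = (fun om => G om w) by apply/funext => om; rewrite mul1r.
move: (h A mA); rewrite e => ->.
by rewrite !mul1r.
Qed.

Lemma gv_meas (w : Z * Q) (A : set R) : measurable A ->
  measurable ((fun om => G om w) @^-1` A).
Proof.
move=> mA; have [h _] := gv_coord w 1.
have e : (fun om => 1 * G om w) = (fun om => G om w) by apply/funext => om; rewrite mul1r.
move: h; rewrite e => h.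
have := h measurableT A mA; by rewrite setTI.
Qed.

Lemma gv_cov_ge0 (w : Z * Q) : 0 <= cov w w.
Proof.
rewrite leNgt; apply/negP => hneg.
have [_ h1] := gv_coord w 1.
have [_ h2] := gv_coord w 2.
have e1 := h1 `](1/4 : R), (1/2 : R)]%classic (measurable_itv _).
have e2 := h2 `](1/2 : R), (1 : R)]%classic (measurable_itv _).
have pre : (fun om => 2 * G om w) @^-1` `](1/2 : R), (1 : R)]%classic =
           (fun om => 1 * G om w) @^-1` `](1/4 : R), (1/2 : R)]%classic.
  apply/seteqP; split => om /=; rewrite !in_itv /= => /andP[u v]; apply/andP; split; lra.
move: e2; rewrite pre e1 /gauss_law.
have l2 : 2 * 2 * cov w w < 0 by nra.
have n1 : 1 * 1 * cov w w != 0 by rewrite !mul1r; exact: (negbT (lt_eqF hneg)).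
have n2 : 2 * 2 * cov w w != 0 by exact: (negbT (lt_eqF l2)).
rewrite (negbTE n1) (negbTE n2) (ltr0_sqrtr l2) ltr0_sqrtr; last by rewrite !mul1r.
move=> hh. rewrite (@unif_itv R (1 * mean w) (1/4) (1/2)) in hh; try lra. rewrite (@unif_itv R (2 * mean w) (1/2) 1) in hh; try lra.
move: hh => /eqP; rewrite eqe => /eqP; lra.
Qed.
End Gv.
Lemma ub_union (R : realType) d (Omega : measurableType d) (P : probability Omega R)
  (T : eqType) (s : seq T) (F : T -> set Omega) (r : R) :
  (forall x, measurable (F x)) -> (forall x, (P (F x) <= r%:E)%E) ->
  (P (\big[setU/set0]_(x <- s) F x) <= ((size s)%:R * r)%:E)%E.
Proof.
move=> mF hF; elim: s => [|x s IH].
  by rewrite big_nil measure0 mul0r.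
rewrite big_cons; apply: le_trans (measureU2 _ _ _) _ => //.
  by apply: bigsetU_measurable.
rewrite /= -addn1 natrD mulrDl mul1r addrC EFinD.
by apply: leeD.
Qed.

Lemma sub_union (Omega : Type) (T : eqType) (s : seq T) (F : T -> set Omega) x :
  x \in s -> F x `<=` \big[setU/set0]_(y <- s) F y.
Proof.
elim: s => [//|y s IH]; rewrite in_cons big_cons => /orP[/eqP ->|hx].
  exact: subsetUl.
by apply: subset_trans (IH hx) _; exact: subsetUr.
Qed.
Theorem lemma10
  (R : realType) (Z Q : finType)
  (k : Z * Q -> Z * Q -> R) (g : Z * Q -> R)
  (lam Bf Rn By delta : R) (D : nat -> R) (m t : nat)
  (ws : 'I_t.-1 -> Z * Q) (y : 'I_t.-1 -> R) (dl : 'I_t.-1 -> nat)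
  (zt : Z) (xstar : Q)
  (d : measure_display) (Omega : measurableType d) (P : probability Omega R)
  (gt : Omega -> Z * Q -> R) (xt : Omega -> Q) :
  psd_kernel k -> (forall w w', k w w' <= 1) ->
  0 <= Bf -> rkhs_norm_le k g Bf ->
  0 < lam -> 0 < delta < 1 -> 0 <= Rn -> 0 <= By ->
  (forall i, 0 <= D i) -> series D @ \oo --> (1 : R) ->
  (1 <= m)%N -> (1 <= t)%N ->
  (forall i, `|y i| <= By) ->
  (forall x, g (zt, x) <= g (zt, xstar)) ->
  let mu := post_mean k lam ws (ytil m t y dl) in
  let sd := post_sd k lam ws in
  let nu := nu_t k lam Bf Rn By delta m ws in
  let c := c_t Z Q nu t in
  let rhom := rho D m in
  Ef_event g mu sd rhom nu ->
  gaussian_vector P gt mu (fun w w' => nu ^+ 2 * post_cov k lam ws w w') ->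
  (forall x, measurable (xt @^-1` [set x])) ->
  (forall om x, gt om (zt, x) <= gt om (zt, xt om)) ->
  ((p_const - 1 / (t%:R ^+ 2))%:E <=
     P [set om | ~~ saturated g sd rhom c zt xstar (xt om)])%E.
Proof.
move=> kpsd k1 Bf0 hg lam0 hdelta Rn0 By0 D0 Dcvg m1 t1 hy hxs mu sd nu c rhom
  hEf hgv hxt hmax.
have law := @gv_law _ _ _ _ _ _ _ _ _ hgv.
have meas := @gv_meas _ _ _ _ _ _ _ _ _ hgv.
have covge0 := @gv_cov_ge0 _ _ _ _ _ _ _ _ _ hgv.
have nu0 : 0 <= nu.
  rewrite /nu /nu_t /beta_t; apply: addr_ge0.
    by apply: mulr_ge0 => //; apply: sumr_ge0 => i _; exact: sqrtr_ge0.
  apply: addr_ge0 => //; apply: mulr_ge0; [lra | exact: sqrtr_ge0].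
have sqrtV : forall w, Num.sqrt (nu ^+ 2 * post_cov k lam ws w w) = nu * sd w.
  by move=> w; rewrite sqrtrM ?sqr_ge0 // sqrtr_sqr ger0_norm.
have V0 : forall w, 0 <= nu ^+ 2 * post_cov k lam ws w w by move=> w; exact: covge0.
set M := ((#|Z| * #|Q| * t ^ 2)%N%:R : R).
set L := Num.sqrt (2 * ln M).
have hZ : (0 < #|Z|)%N by apply/card_gt0P; exists zt.
have hQ : (0 < #|Q|)%N by apply/card_gt0P; exists xstar.
have M1 : 1 <= M by rewrite /M ler1n !muln_gt0 hZ hQ /= ?expn_gt0 ?t1.
have lnM0 : 0 <= ln M by exact: ln_ge0.
have hL : expR (- (L ^+ 2 / 2)) = M^-1.
  rewrite /L sqr_sqrtr ?mulr_ge0 // (_ : 2 * ln M / 2 = ln M); last by field.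
  by rewrite expRN lnK // posrE; lra.
have L0 : 0 <= L by exact: sqrtr_ge0.
have hc : c = nu * (1 + L) by [].
pose V x := nu ^+ 2 * post_cov k lam ws (zt, x) (zt, x).
pose Aev := (fun om => gt om (zt, xstar)) @^-1` `[(mu (zt, xstar) + Num.sqrt (V xstar))%R, +oo[%classic.
pose B x := (fun om => gt om (zt, x)) @^-1` `](mu (zt, x) + L * Num.sqrt (V x))%R, +oo[%classic.
pose U := \big[setU/set0]_(x <- enum Q) B x.
pose Tg := [set om | ~~ saturated g sd rhom c zt xstar (xt om)].
have mA : measurable Aev by apply: meas; exact: measurable_itv.
have mB : forall x, measurable (B x) by move=> x; apply: meas; exact: measurable_itv.
have mU : measurable U by apply: bigsetU_measurable => x _; exact: mB.
have mT : measurable Tg.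
  have -> : Tg = \bigcup_(x in [set x | ~~ saturated g sd rhom c zt xstar x]) (xt @^-1` [set x]).
    apply/seteqP; split => om /=.
      by move=> h; exists (xt om).
    by case=> x hx /= hx2; rewrite /Tg /= hx2.
  by apply: fin_bigcup_measurable => //; exact: finite_finset.
have hA : (p_const%:E <= P Aev)%E by rewrite /Aev law; [exact: G2 | exact: measurable_itv].
have hB : forall x, (P (B x) <= (M^-1)%:E)%E.
  by move=> x; rewrite /B law -?hL; [exact: G1 | exact: measurable_itv].
have hU : (P U <= ((t%:R ^+ 2)^-1)%:E)%E.
  apply: le_trans (@ub_union R d Omega P Q (enum Q) B (M^-1) mB hB) _.
  rewrite -cardT lee_fin /M natrM natrX natrM.
  have zp : 0 < (#|Z|%:R : R) by rewrite ltr0n.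
  have qp : 0 < (#|Q|%:R : R) by rewrite ltr0n.
  have tp : 0 < (t%:R : R) by rewrite ltr0n.
  have -> : (#|Q|%:R : R) * ((#|Z|%:R * #|Q|%:R * t%:R ^+ 2))^-1 =
            (#|Z|%:R)^-1 * (t%:R ^+ 2)^-1.
    by field; rewrite !gt_eqF.
  apply: ler_piMl; first by rewrite invr_ge0 exprn_ge0 ?ltW.
  by rewrite invr_le1 ?unitfE ?gt_eqF // ler1n.
have sub : Aev `<=` Tg `|` U.
  move=> om hAom; have [hU'|hnU] := pselect (U om); [by right | left].
  rewrite /Tg /=; apply/negP => hsat.
  set x := xt om in hsat.
  have hb2 : gt om (zt, x) <= mu (zt, x) + L * Num.sqrt (V x).
    rewrite leNgt; apply/negP => h; apply: hnU.
    apply: (@sub_union Omega Q (enum Q) B x); first by rewrite mem_enum.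
    by rewrite /B /= in_itv /= h.
  move: hAom; rewrite /Aev /= in_itv /= andbT => hAom.
  rewrite /V /= sqrtV in hAom; rewrite /V /= sqrtV in hb2.
  have e1 := hEf (zt, x); have e2 := hEf (zt, xstar).
  rewrite ler_norml in e1; rewrite ler_norml in e2.
  move/andP: e1 => [e1a e1b]; move/andP: e2 => [e2a e2b].
  have hm : gt om (zt, xstar) <= gt om (zt, x) := hmax om xstar.
  rewrite /saturated in hsat.
  have ce : c * sd (zt, x) = nu * sd (zt, x) + L * (nu * sd (zt, x)) by rewrite hc; ring.
  have re : rhom * (g (zt, xstar) - g (zt, x)) = rhom * g (zt, xstar) - rhom * g (zt, x) by ring.
  rewrite ce re in hsat.
  lra.
have h1 : (p_const%:E <= P Tg + P U)%E.
  apply: le_trans hA _; apply: le_trans (measureU2 _ mT mU).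
  by apply: le_measure => //; rewrite inE //; exact: measurableU.
have h2 := le_trans h1 (leeD2l (P Tg) hU).
move: h2; rewrite -/Tg; case: (P Tg) => [r||] //=.
  by rewrite -EFinD !lee_fin div1r; lra.
by move=> _; rewrite leey.
Qed.
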